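(* Let $n\geq 3$ and let $C_n$ be the cycle with vertices $v_1,\dots,v_n$, where $v_i\sim v_{(i+1)\bmod n}$. Fix a pair $\{l,j\}\subset\{1,2,3\}$ with $l\neq j$. Then for every 0-cell $\eta\in\mathrm{Hom}(C_n,K_3)$, every vertex $v_i$ of $C_n$ is a return point of exactly one of $\eta$ and $\eta_{\{l,j\}}$. Consequently $r(\eta_{\{l,j\}})=n-r(\eta)$.
   Context: $K_3$ has vertex set $\{1,2,3\}$, viewed as the cycle $C_3$ with $a\sim (a+1)\bmod 3$. A 0-cell of $\mathrm{Hom}(C_n,K_3)$ is a graph homomorphism $\eta:V(C_n)\to\{1,2,3\}$ (adjacent vertices receive distinct values). A vertex $v_i$ is a return point of $\eta$ if $\eta(v_{i+1})-\eta(v_i)\equiv -1 \pmod 3$ (indices of $v$ taken mod $n$); $r(\eta)$, the return number, is the number of return points of $\eta$. For a 0-cell $\eta$ and a pair $\{l,j\}$, the interchanged 0-cell $\eta_{\{l,j\}}$ is defined by $\eta_{\{l,j\}}^{-1}(l)=\eta^{-1}(j)$, $\eta_{\{l,j\}}^{-1}(j)=\eta^{-1}(l)$, and $\eta_{\{l,j\}}^{-1}(i)=\eta^{-1}(i)$ for $i\notin\{l,j\}$. *)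

(* Defs.v *)
From mathcomp Require Import all_boot all_order.
Set Implicit Arguments. Unset Strict Implicit. Unset Printing Implicit Defensive.

(* Conventions: vertex v_{i+1} of C_n is the ordinal i : 'I_n, so that
   v_i ~ v_{(i+1) mod n} becomes i ~ ordS i.  Colour a in {1,2,3} of K_3 is the
   ordinal a-1 : 'I_3 (a shift which preserves arithmetic mod 3). *)

Definition cyc_succ (n : nat) (i : 'I_n) : 'I_n := ordS i.

Definition is_hom (n : nat) (eta : 'I_n -> 'I_3) : bool :=
  [forall i : 'I_n, eta i != eta (cyc_succ i)].

(* v_i is a return point: eta(v_{i+1}) - eta(v_i) = -1 (mod 3),
   i.e. eta(v_{i+1}) + 1 = eta(v_i) (mod 3). *)
Definition return_point (n : nat) (eta : 'I_n -> 'I_3) (i : 'I_n) : bool :=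
  (eta (cyc_succ i) + 1) %% 3 == (eta i : nat).

Definition return_number (n : nat) (eta : 'I_n -> 'I_3) : nat :=
  #|[pred i : 'I_n | return_point eta i]|.

Definition is_interchange (n : nat) (l j : 'I_3) (eta eta' : 'I_n -> 'I_3) : Prop :=
  (forall v, (eta' v == l) = (eta v == j)) /\
  (forall v, (eta' v == j) = (eta v == l)) /\
  (forall i v, i != l -> i != j -> (eta' v == i) = (eta v == i)).

(* Main.v *)
Require Import Defs.
From mathcomp Require Import all_boot all_order.

Definition irel (l j a a' : 'I_3) : bool :=
  [&& (a' == l) == (a == j), (a' == j) == (a == l) &
   [forall i : 'I_3, (i != l) ==> (i != j) ==> ((a' == i) == (a == i))]].

Definition rpb (a b : 'I_3) : bool := (b + 1) %% 3 == (a : nat).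

Lemma key (l j a b a' b' : 'I_3) : l != j -> a != b -> irel l j a a' -> irel l j b b' ->
  rpb a b (+) rpb a' b'.
Proof.
case: l => [[|[|[|//]]] ?]; case: j => [[|[|[|//]]] ?];
case: a => [[|[|[|//]]] ?]; case: b => [[|[|[|//]]] ?];
case: a' => [[|[|[|//]]] ?]; case: b' => [[|[|[|//]]] ?];
by rewrite /irel /rpb; do ?[apply/implyP; move/forallP] .
Qed.

Theorem lemma4p6 (n : nat) (hn : 3 <= n) (l j : 'I_3) (hlj : l != j)
    (eta eta' : 'I_n -> 'I_3) (heta : is_hom eta)
    (hint : is_interchange l j eta eta') :
  (forall i : 'I_n, return_point eta i (+) return_point eta' i) /\
  return_number eta' = n - return_number eta.
Proof.
have hr : forall v, irel l j (eta v) (eta' v).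
  move=> v; case: hint => [h1 [h2 h3]].
  rewrite /irel h1 h2 !eqxx /=; apply/forallP => i.
  by apply/implyP => hi; apply/implyP => hj; rewrite h3.
have hx : forall i : 'I_n, return_point eta i (+) return_point eta' i.
  move=> i; have := @key l j _ _ _ _ hlj _ (hr i) (hr (cyc_succ i)); apply.
  by move/forallP: heta => /(_ i).
split=> //.
rewrite /return_number.
have -> : #|[pred i | return_point eta' i]| = #|[predC [pred i | return_point eta i]]|.
  apply: eq_card => i; rewrite !inE /=.
  by move: (hx i); case: (return_point eta i); case: (return_point eta' i).
have := cardC [pred i | return_point eta i]; rewrite card_ord => h; apply/eqP; rewrite -(eqn_add2l #|[pred i | return_point eta i]|) subnKC; [by rewrite h | by apply: leq_trans (max_card _) _; rewrite card_ord].
Qed.
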